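(* Let $(n_1, n_2, 2, n_4, \dots, n_k)$ be an integer partition (with nonincreasing parts) in which $n_2 \geqslant 3$, and suppose it corresponds to the eigenvalue $\lambda$. Then the partition $(n_1, n_2, 3, n_4, \dots, n_k)$ also corresponds to the eigenvalue $\lambda$.
   Context: An integer partition $(n_1,\dots,n_k)$ of $n$ (with $n_1\geqslant n_2\geqslant\dots\geqslant n_k\geqslant 1$ and $\sum_j n_j=n$) is said to correspond to the eigenvalue $\lambda$ if $\lambda=\sum_{j=1}^k \frac{n_j(n_j-2j+1)}{2}$; this number is the eigenvalue of the Transposition graph $T_n=\mathrm{Cay}(\mathrm{Sym}_n,T)$ ($T$ the set of all transpositions) associated with the irreducible character of $\mathrm{Sym}_n$ indexed by the partition. *)

(* Defs.v *)
From mathcomp Require Import all_boot all_order all_algebra.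
Set Implicit Arguments. Unset Strict Implicit. Unset Printing Implicit Defensive.
Import Order.TTheory GRing.Theory Num.Theory.

Definition is_partition (s : seq nat) : bool :=
  sorted geq s && all (fun x => 0 < x)%N s.

Local Open Scope ring_scope.

(* lambda(s) = sum_{j=1}^k n_j (n_j - 2 j + 1) / 2, computed in rat
   (index j is 1-based; i : 'I_k is 0-based so j = i+1). *)
Definition partition_eigenvalue (s : seq nat) : rat :=
  \sum_(i < size s)
     ((nth 0%N s i)%:R * ((nth 0%N s i)%:R - 2 * (i.+1)%:R + 1)) / 2.

Definition corresponds (s : seq nat) (lam : rat) : Prop :=
  is_partition s /\ lam = partition_eigenvalue s.

(* Main.v *)
Require Import Defs.
From mathcomp Require Import all_boot all_order all_algebra.
Import Order.TTheory GRing.Theory Num.Theory.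

Theorem lemma3 (n1 n2 : nat) (rest : seq nat) (lam : rat) :
  (3 <= n2)%N ->
  corresponds [:: n1, n2, 2%N & rest] lam ->
  corresponds [:: n1, n2, 3%N & rest] lam.
Proof.
move=> h3 [Hp ->]; split.
  move: Hp; rewrite /is_partition /=.
  case: rest => [|r rs] /=.
    by rewrite h3 => /andP[/andP[-> _] /and3P[-> ->]].
  move=> /andP[/andP[-> /andP[_ /andP[Hr ->]]] /=]; rewrite h3 (leq_trans Hr) //=.

rewrite /partition_eigenvalue.
have -> : size [:: n1, n2, 2%N & rest] = (size rest).+3 by [].
have -> : size [:: n1, n2, 3%N & rest] = (size rest).+3 by [].
rewrite !big_ord_recl /=.
congr (_ + (_ + (_ + _)))%R.
Qed.
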